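(* Let $n$ be a positive integer, let $u$ be the unique positive real root of $x^{2n+1} + x^{2n} + \cdots + x^{n} - x^{n-1} - \cdots - x - 1 = 0$, and let $L(x)=\mathrm{Li}_2(x)+\tfrac12\log x\,\log(1-x)$ for $0<x<1$ denote Rogers' dilogarithm. Then $$2L\!\left(u^{n+2}\right) - 2L\!\left(u^{n}\right) - L\!\left(u^2\right) = -\zeta(2).$$
   Context: $\mathrm{Li}_2(x)=\sum_{k\ge1}x^k/k^2$, $\log$ is the real natural logarithm, $\zeta(2)=\pi^2/6$. *)

(* Defs.v *)
From Stdlib Require Import Reals.
From Coquelicot Require Import Coquelicot.
Open Scope R_scope.

Definition Li2 (x : R) : R :=
  Series (fun k : nat => x ^ (S k) / (INR (S k)) ^ 2).

Definition RogersL (x : R) : R :=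
  Li2 x + / 2 * ln x * ln (1 - x).

Definition Pn (n : nat) (x : R) : R :=
  sum_f_R0 (fun k => x ^ (n + k)) (S n) - sum_f_R0 (fun k => x ^ k) (pred n).

Definition zeta2 : R := PI ^ 2 / 6.

(* Main.v *)
Require Import Defs.
From Coquelicot Require Import Coquelicot.
From Stdlib Require Import Reals Lra Lia.
Open Scope R_scope.
Lemma H_der (m : nat) x : is_derive (fun x => sin x * cos x ^ (2*m+1)) x
   (INR (2*m+2) * cos x ^ (2*m+2) - INR (2*m+1) * cos x ^ (2*m)).
Proof.
auto_derive. trivial.
replace (Init.Nat.pred (m + (m + 0) + 1)) with (2*m)%nat by lia.
replace (m + (m + 0) + 1)%nat with (2*m+1)%nat by lia.
rewrite !pow_add, !plus_INR, !mult_INR. simpl.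
pose proof (sin2_cos2 x) as E. unfold Rsqr in E.
set (c := cos x ^ (2*m)) in *. ring_simplify. replace (sin x ^ 2) with (1 - cos x ^ 2) by (simpl; lra). ring.
Qed.
Lemma G_der (m : nat) x : is_derive (fun x => x * cos x ^ (2*m+2) + INR (m+1) * x^2 * sin x * cos x ^ (2*m+1)) x
   (cos x ^ (2*m+2) + 2 * INR (m+1) ^ 2 * (x^2 * cos x ^ (2*m+2)) - INR (m+1) * INR (2*m+1) * (x^2 * cos x ^ (2*m))).
Proof.
auto_derive. trivial.
replace (Init.Nat.pred (m + (m + 0) + 1)) with (2*m)%nat by lia.
replace (Init.Nat.pred (m + (m + 0) + 2)) with (2*m+1)%nat by lia.
replace (m + (m + 0) + 1)%nat with (2*m+1)%nat by lia.
replace (m + (m + 0) + 2)%nat with (2*m+2)%nat by lia.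
rewrite !pow_add, !plus_INR, !mult_INR. simpl.
pose proof (sin2_cos2 x) as E. unfold Rsqr in E.
set (c := cos x ^ (2*m)) in *. ring_simplify. replace (sin x ^ 2) with (1 - cos x ^ 2) by (simpl; lra). ring.
Qed.

Lemma contR (f : R -> R) x : ex_derive f x -> continuous f x.
Proof. intro H. apply (ex_derive_continuous (K:=R_AbsRing) (V:=R_NormedModule)). exact H. Qed.

Definition Ic (m : nat) : R := RInt (fun x => cos x ^ (2*m)) 0 (PI/2).
Definition Jc (m : nat) : R := RInt (fun x => x^2 * cos x ^ (2*m)) 0 (PI/2).

Lemma exI k : ex_RInt (fun x => cos x ^ k) 0 (PI/2).
Proof. apply (ex_RInt_continuous (V:=R_CompleteNormedModule)); intros; apply contR; auto_derive; auto. Qed.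
Lemma exJ k : ex_RInt (fun x => x^2 * cos x ^ k) 0 (PI/2).
Proof. apply (ex_RInt_continuous (V:=R_CompleteNormedModule)); intros; apply contR; auto_derive; auto. Qed.

Lemma RInt_comb3 (f g h : R -> R) a b al be : ex_RInt f a b -> ex_RInt g a b -> ex_RInt h a b ->
  RInt (fun x => f x + al * g x - be * h x) a b = RInt f a b + al * RInt g a b - be * RInt h a b.
Proof.
intros Hf Hg Hh. apply is_RInt_unique.
apply (is_RInt_minus (fun x => f x + al * g x) (fun x => be * h x)).
apply (is_RInt_plus f (fun x => al * g x)). apply (RInt_correct (V:=R_CompleteNormedModule)); auto.
apply (is_RInt_scal g). apply (RInt_correct (V:=R_CompleteNormedModule)); auto.
apply (is_RInt_scal h). apply (RInt_correct (V:=R_CompleteNormedModule)); auto.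
Qed.

Lemma PI2_pos : 0 < PI/2. Proof. pose proof PI_RGT_0; lra. Qed.

Lemma FTC0 (F dF : R -> R) : (forall x, is_derive F x (dF x)) -> (forall x, continuous dF x) ->
  F (PI/2) = 0 -> F 0 = 0 -> RInt dF 0 (PI/2) = 0.
Proof.
intros HD HC H1 H0. apply is_RInt_unique.
assert (H := is_RInt_derive (V:=R_CompleteNormedModule) F dF 0 (PI/2) (fun x _ => HD x) (fun x _ => HC x)).
rewrite H1, H0, minus_eq_zero in H. exact H.
Qed.


Lemma RInt_comb2 (g h : R -> R) a b al be : ex_RInt g a b -> ex_RInt h a b ->
  RInt (fun x => al * g x - be * h x) a b = al * RInt g a b - be * RInt h a b.
Proof.
intros Hg Hh. apply is_RInt_unique.
apply (is_RInt_minus (fun x => al * g x) (fun x => be * h x)).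
apply (is_RInt_scal g). apply (RInt_correct (V:=R_CompleteNormedModule)); auto.
apply (is_RInt_scal h). apply (RInt_correct (V:=R_CompleteNormedModule)); auto.
Qed.

Lemma recI m : INR (2*m+2) * Ic (m+1) - INR (2*m+1) * Ic m = 0.
Proof.
unfold Ic. replace (2*(m+1))%nat with (2*m+2)%nat by lia.
rewrite <- RInt_comb2; try apply exI.
apply (FTC0 (fun x => sin x * cos x ^ (2*m+1)) (fun x => INR (2 * m + 2) * cos x ^ (2 * m + 2) - INR (2 * m + 1) * cos x ^ (2 * m))).
- intro x. apply H_der.
- (intros; apply contR; auto_derive; auto).
- rewrite cos_PI2. rewrite pow_i by lia. ring.
- rewrite sin_0; ring.
Qed.

Lemma recJ m : Ic (m+1) + 2 * INR (m+1) ^ 2 * Jc (m+1) - INR (m+1) * INR (2*m+1) * Jc m = 0.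
Proof.
unfold Ic, Jc. replace (2*(m+1))%nat with (2*m+2)%nat by lia.
rewrite <- (RInt_comb3 (fun x => cos x ^ (2*m+2)) (fun x => x^2 * cos x^(2*m+2)) (fun x=> x^2*cos x^(2*m))).
2: apply exI. 2: apply exJ. 2: apply exJ.
apply (FTC0 (fun x => x * cos x ^ (2*m+2) + INR (m+1) * x^2 * sin x * cos x ^ (2*m+1))
  (fun x => cos x ^ (2*m+2) + 2 * INR (m+1) ^ 2 * (x^2 * cos x ^ (2*m+2)) - INR (m+1) * INR (2*m+1) * (x^2 * cos x ^ (2*m)))).
- intro x. apply G_der.
- intros; apply contR; auto_derive; auto.
- rewrite cos_PI2. rewrite !pow_i by lia. ring.
- simpl; ring.
Qed.

Lemma I0 : Ic 0 = PI/2.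
Proof.
unfold Ic. simpl. rewrite RInt_const. unfold scal; simpl; unfold mult; simpl. ring.
Qed.

Lemma J0 : Jc 0 = (PI/2)^3/3.
Proof.
unfold Jc. apply is_RInt_unique.
assert (H := is_RInt_derive (V:=R_CompleteNormedModule) (fun x => x^3/3) (fun x => x^2 * cos x ^ (2*0)) 0 (PI/2)).
replace ((PI/2)^3/3) with (minus ((PI/2)^3/3) (0^3/3)). apply H.
- intros x _. auto_derive; auto. simpl; field.
- intros x _. apply contR; auto_derive; auto.
- assert (E : (PI/2)^3/3 - 0^3/3 = (PI/2)^3/3) by field. exact E.
Qed.

Lemma xcos_le_sin x : 0 <= x <= PI/2 -> x * cos x <= sin x.
Proof.
intros [H0 H1]. destruct (Req_dec x 0) as [->|Hx]. rewrite sin_0; lra.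
destruct (MVT_gen (fun t => sin t - t * cos t) 0 x (fun t => t * sin t)) as [c [Hc E]].
- intros t _. auto_derive; auto. ring.
- intros t _. apply continuity_pt_filterlim. apply (contR (fun t => sin t - t * cos t)). auto_derive; auto.
- rewrite Rmin_left in Hc by lra. rewrite Rmax_right in Hc by lra.
  rewrite sin_0 in E. 
  assert (0 <= sin c) by (apply sin_ge_0; pose proof PI_RGT_0; lra).
  assert (0 <= c * sin c * (x - 0)) by (apply Rmult_le_pos; [apply Rmult_le_pos|]; lra).
  lra.
Qed.

Lemma Jpos k : 0 <= Jc k.
Proof.
unfold Jc. apply RInt_ge_0. pose proof PI2_pos; lra. apply exJ.
intros x Hx. apply Rmult_le_pos. apply pow2_ge_0. rewrite pow_mult. apply pow_le. apply pow2_ge_0.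
Qed.

Lemma Jbound m : Jc (m+1) <= Ic m - Ic (m+1).
Proof.
unfold Jc, Ic. replace (2*(m+1))%nat with (2*m+2)%nat by lia.
replace (RInt (fun x => cos x ^ (2 * m)) 0 (PI / 2) - RInt (fun x => cos x ^ (2 * m + 2)) 0 (PI / 2))
  with (1 * RInt (fun x => cos x ^ (2 * m)) 0 (PI / 2) - 1 * RInt (fun x => cos x ^ (2 * m + 2)) 0 (PI / 2)) by ring.
rewrite <- (RInt_comb2 (fun x => cos x ^ (2 * m)) (fun x => cos x ^ (2 * m + 2))).
2: apply exI. 2: apply exI.
apply RInt_le. pose proof PI2_pos; lra. apply exJ.
apply (ex_RInt_continuous (V:=R_CompleteNormedModule)); intros; apply contR; auto_derive; auto.
intros x Hx.
assert (Hc : 0 <= cos x) by (apply cos_ge_0; pose proof PI_RGT_0; lra).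
assert (Hxc := xcos_le_sin x ltac:(lra)).
assert (0 <= x * cos x) by (apply Rmult_le_pos; lra).
assert (Hp : 0 <= cos x ^ (2*m)) by (apply pow_le; lra).
rewrite !pow_add. 
pose proof (sin2_cos2 x) as E. unfold Rsqr in E.
assert ((x * cos x)^2 <= sin x ^2) by (simpl; nra).
set (c := cos x ^ (2*m)) in *.
assert (x ^ 2 * (c * cos x ^ 2) = (x * cos x)^2 * c) by ring.
assert (1 * c - 1 * (c * cos x ^ 2) = sin x ^ 2 * c) by (simpl; nra).
nra.
Qed.

Lemma Ipos k : 0 < Ic k.
Proof.
induction k. rewrite I0; apply PI2_pos.
replace (S k) with (k+1)%nat by lia.
pose proof (recI k). assert (0 < INR (2*k+2)) by (apply lt_0_INR; lia).
assert (0 < INR (2*k+1)) by (apply lt_0_INR; lia).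
assert (Ic (k+1) = INR (2*k+1) / INR (2*k+2) * Ic k) by (field_simplify_eq; lra).
rewrite H2. apply Rmult_lt_0_compat; auto. apply Rdiv_lt_0_compat; auto.
Qed.

Definition rr k := 2 * Jc k / Ic k.

Lemma rr_step m : / INR (S m) ^ 2 = rr m - rr (m+1).
Proof.
unfold rr. pose proof (recI m). pose proof (recJ m). pose proof (Ipos m). pose proof (Ipos (m+1)).
rewrite S_INR. rewrite !plus_INR, !mult_INR in *. simpl in *.
set (a := INR m) in *. assert (0 <= a) by apply pos_INR.
assert (E1 : Ic m = (2*a+2)/(2*a+1) * Ic (m+1)) by (field_simplify_eq; lra).
assert (E2 : Jc (m+1) = ((a+1)*(2*a+1) * Jc m - Ic (m+1)) / (2 * (a+1)^2)) by (field_simplify_eq; nra).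
rewrite E2, E1. field. lra.
Qed.

Lemma rr_bound m : 0 <= rr (m+1) <= 2 / INR (2*m+1).
Proof.
unfold rr. pose proof (recI m). pose proof (Jbound m). pose proof (Jpos (m+1)). pose proof (Ipos (m+1)). pose proof (Ipos m).
assert (0 < INR (2*m+1)) by (apply lt_0_INR; lia).
rewrite !plus_INR, !mult_INR in *. simpl in *.
set (a := INR m) in *.
assert (E1 : Ic m = (2*a+2)/(2*a+1) * Ic (m+1)) by (field_simplify_eq; lra).
rewrite E1 in H0.
assert (E3 : (2*a+2)/(2*a+1)*Ic (m+1) - Ic (m+1) = Ic (m+1)/(2*a+1)) by (field; lra).
rewrite E3 in H0.
assert (HJ : Jc (m+1) * (2*a+1) <= Ic (m+1)).
{ apply (Rmult_le_compat_r (2*a+1)) in H0; [|lra].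
  replace (Ic (m+1)/(2*a+1) * (2*a+1)) with (Ic (m+1)) in H0 by (field; lra). exact H0. }
split. apply Rmult_le_pos; [lra| apply Rlt_le, Rinv_0_lt_compat; auto].
assert (E4 : 2/(2*a+1) - 2 * Jc (m+1) / Ic (m+1) = 2 * (Ic (m+1) - Jc (m+1) * (2*a+1)) / ((2*a+1) * Ic (m+1))) by (field; lra).
assert (0 <= 2 * (Ic (m+1) - Jc (m+1) * (2*a+1)) / ((2*a+1) * Ic (m+1))).
{ apply Rdiv_le_0_compat. lra. apply Rmult_lt_0_compat; lra. }
replace ((1+1)*a+1) with (2*a+1) by ring. lra.
Qed.

Definition aB (k : nat) : R := / INR (S k) ^ 2.

Lemma rr0 : rr 0 = PI^2/6.
Proof. unfold rr. rewrite I0, J0. pose proof PI_RGT_0. field. lra. Qed.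

Lemma sumB N : sum_f_R0 aB N = rr 0 - rr (N+1).
Proof.
induction N.
- simpl sum_f_R0. unfold aB. rewrite (rr_step 0). reflexivity.
- simpl sum_f_R0. rewrite IHN. unfold aB. rewrite (rr_step (S N)).
  replace (S N) with (N+1)%nat by lia. ring.
Qed.

Lemma lim_small : is_lim_seq (fun N => 2 / INR (2*N+1)) 0.
Proof.
apply is_lim_seq_ext with (fun N => / (INR (2*N+1) / 2)).
{ intro n. assert (0 < INR (2*n+1)) by (apply lt_0_INR; lia). field. lra. }
replace (Finite 0) with (Rbar_inv p_infty) by reflexivity.
apply is_lim_seq_inv. 2: discriminate.
apply is_lim_seq_le_p_loc with INR. 2: apply is_lim_seq_INR.
exists 0%nat. intros n _. rewrite plus_INR, mult_INR. simpl. pose proof (pos_INR n). lra.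
Qed.

Lemma Basel : is_series aB (PI^2/6).
Proof.
assert (H : is_lim_seq (sum_n aB) (PI^2/6)). 2: exact H.
apply (is_lim_seq_le_le (fun N => PI^2/6 - 2 / INR (2*N+1)) _ (fun _ => PI^2/6)).
- intro n. rewrite sum_n_Reals, sumB, rr0. pose proof (rr_bound n). lra.
- replace (PI^2/6) with (PI^2/6 - 0) at 1 by ring. apply is_lim_seq_minus'. apply is_lim_seq_const. apply lim_small.
- apply is_lim_seq_const.
Qed.

Definition cB (k : nat) : R := / INR (S k).

Lemma Li2_PS x : Li2 x = PSeries (PS_incr_1 aB) x.
Proof.
rewrite PSeries_incr_1. unfold Li2, PSeries. rewrite <- Series_scal_l.
apply Series_ext. intro k. change (scal (x^k) (aB k)) with (x^k * aB k). unfold aB.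
rewrite <- tech_pow_Rmult. field. apply not_0_INR. lia.
Qed.

Lemma rad_one : CV_radius (fun _ => 1) = 1.
Proof.
rewrite (CV_radius_finite_DAlembert _ 1). f_equal; field.
intros; lra. lra.
apply is_lim_seq_ext with (fun _ => 1). intros. rewrite Rdiv_diag by lra. rewrite Rabs_R1; auto.
apply is_lim_seq_const.
Qed.

Lemma rad_c : CV_radius cB = 1.
Proof.
rewrite <- CV_radius_incr_1, <- CV_radius_derive. rewrite <- rad_one.
apply CV_radius_ext. intro n. change (INR (S n) * / INR (S n) = 1). field. apply not_0_INR; lia.
Qed.

Lemma PSd_aB n : PS_derive (PS_incr_1 aB) n = cB n.
Proof. change (INR (S n) * / INR (S n) ^ 2 = / INR (S n)). field. apply not_0_INR; lia. Qed.

Lemma rad_a : CV_radius aB = 1.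
Proof.
rewrite <- CV_radius_incr_1, <- CV_radius_derive. rewrite <- rad_c.
apply CV_radius_ext. apply PSd_aB.
Qed.

Lemma PS_one x : Rabs x < 1 -> PSeries (fun _ => 1) x = / (1 - x).
Proof.
intro H. unfold PSeries. apply is_series_unique.
apply is_series_ext with (fun n => x ^ n). intro n. unfold scal; simpl; unfold mult; simpl; ring.
apply is_series_geom; auto.
Qed.

Lemma log_series x : -1 < x < 1 -> PSeries (PS_incr_1 cB) x = - ln (1 - x).
Proof.
intros Hx.
set (g := fun y => PSeries (PS_incr_1 cB) y + ln (1 - y)).
assert (Hd : forall y, -1 < y < 1 -> is_derive g y 0).
{ intros y Hy. unfold g.
  assert (H1 : is_derive (PSeries (PS_incr_1 cB)) y (PSeries (PS_derive (PS_incr_1 cB)) y)).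
  { apply is_derive_PSeries. rewrite CV_radius_incr_1, rad_c. simpl. apply Rabs_def1; lra. }
  assert (E : PSeries (PS_derive (PS_incr_1 cB)) y = / (1 - y)).
  { rewrite <- PS_one by (apply Rabs_def1; lra). apply PSeries_ext. intro n.
    change (INR (S n) * / INR (S n) = 1). field. apply not_0_INR; lia. }
  rewrite E in H1.
  assert (H2 : is_derive (fun y => ln (1 - y)) y (- / (1 - y))).
  { auto_derive. lra. field. lra. }
  replace 0 with (plus (/ (1 - y)) (- / (1-y))) by (unfold plus; simpl; ring).
  apply (is_derive_plus (PSeries (PS_incr_1 cB)) (fun y => ln (1 - y))); auto. }
assert (g0 : g 0 = 0). { unfold g. rewrite PSeries_0. change (0 + ln (1 - 0) = 0). rewrite Rminus_0_r, ln_1. ring. }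
destruct (Rlt_le_dec 0 x) as [Hp|Hn].
- assert (g 0 = g x). { apply eq_is_derive; auto. intros t Ht. apply Hd; lra. }
  rewrite g0 in H. unfold g in H. lra.
- destruct (Req_dec x 0) as [->|Hne].
  + unfold g in g0. lra.
  + assert (g x = g 0). { apply eq_is_derive; [|lra]. intros t Ht. apply Hd; lra. }
    rewrite g0 in H. unfold g in H. lra.
Qed.

Lemma Li2_deriv x : 0 < x < 1 -> is_derive Li2 x (- ln (1 - x) / x).
Proof.
intro Hx.
assert (H : is_derive (PSeries (PS_incr_1 aB)) x (PSeries (PS_derive (PS_incr_1 aB)) x)).
{ apply is_derive_PSeries. rewrite CV_radius_incr_1, rad_a. simpl. apply Rabs_def1; lra. }
assert (E : PSeries (PS_derive (PS_incr_1 aB)) x = - ln (1 - x) / x).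
{ rewrite (PSeries_ext _ cB) by apply PSd_aB.
  rewrite <- log_series by lra. rewrite PSeries_incr_1. field. lra. }
rewrite E in H.
apply (is_derive_ext (PSeries (PS_incr_1 aB))); auto.
intro t; rewrite Li2_PS; auto.
Qed.

Definition Lp (x : R) : R := - / 2 * (ln (1 - x) / x + ln x / (1 - x)).

Lemma RL_deriv x : 0 < x < 1 -> is_derive RogersL x (Lp x).
Proof.
intro Hx.
assert (H1 := Li2_deriv x Hx).
assert (H2 : is_derive (fun y => / 2 * ln y * ln (1 - y)) x (/2 * (ln (1-x) / x - ln x / (1 - x)))).
{ auto_derive. repeat split; lra. unfold Rminus; field; lra. }
assert (H3 := is_derive_plus Li2 (fun y => / 2 * ln y * ln (1 - y)) x _ _ H1 H2).
unfold RogersL. replace (Lp x) with (plus (- ln (1 - x) / x) (/2 * (ln (1-x) / x - ln x / (1 - x)))).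
apply (is_derive_ext _ _ _ _ (fun t => eq_refl)) in H3. exact H3.
unfold Lp. change (- ln (1 - x) / x + / 2 * (ln (1 - x) / x - ln x / (1 - x)) = - / 2 * (ln (1 - x) / x + ln x / (1 - x))). field. lra.
Qed.

Lemma RL_comp (g : R -> R) dg t : is_derive g t dg -> 0 < g t < 1 ->
  is_derive (fun s => RogersL (g s)) t (dg * Lp (g t)).
Proof.
intros Hg Hr. apply (is_derive_comp RogersL g t (Lp (g t)) dg); auto. apply RL_deriv; auto.
Qed.

Definition FF (t : R) : R := 2 * RogersL (1 - t) - 2 * RogersL (1 / (1 + t)) - RogersL (1 - t ^ 2).

Lemma FF_deriv t : 0 < t < 1 -> is_derive FF t 0.
Proof.
intro Ht.
assert (A1 : is_derive (fun s => RogersL (1 - s)) t ((-1) * Lp (1 - t))).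
{ apply (RL_comp (fun s => 1 - s)). auto_derive; auto; ring. lra. }
assert (A2 : is_derive (fun s => RogersL (1 / (1 + s))) t ((- 1 / (1+t)^2) * Lp (1 / (1 + t)))).
{ apply (RL_comp (fun s => 1 / (1 + s))). auto_derive. lra. field. lra.
  split. apply Rdiv_lt_0_compat; lra. apply (Rmult_lt_reg_r (1+t)). lra. field_simplify; lra. }
assert (A3 : is_derive (fun s => RogersL (1 - s^2)) t ((- 2 * t) * Lp (1 - t^2))).
{ apply (RL_comp (fun s => 1 - s^2)). auto_derive; auto; ring. simpl; split; nra. }
apply is_derive_scal with (k := 2) in A1.
apply is_derive_scal with (k := 2) in A2.
assert (B := is_derive_minus _ _ _ _ _ A1 A2).
assert (C := is_derive_minus _ _ _ _ _ B A3).
apply (is_derive_ext _ _ _ _ (fun t => eq_refl)) in C.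
unfold FF.
match type of C with is_derive _ _ ?d => replace 0 with d end. exact C.
change (2 * (-1 * Lp (1 - t)) - 2 * (-1 / (1 + t) ^ 2 * Lp (1 / (1 + t))) - -2 * t * Lp (1 - t ^ 2) = 0).
unfold Lp.
replace (1 - (1 - t)) with t by ring.
replace (1 - 1 / (1 + t)) with (t / (1 + t)) by (field; lra).
replace (1 - (1 - t^2)) with (t * t) by ring.
replace (1 - t^2) with ((1 - t) * (1 + t)) by ring.
rewrite ln_div, ln_div, ln_mult, ln_mult, ln_1 by lra.
field. repeat split; try lra; nra.
Qed.

Lemma FF_const s t : 0 < s < 1 -> 0 < t < 1 -> FF s = FF t.
Proof.
intros Hs Ht. destruct (Rlt_le_dec s t) as [H|H].
- apply eq_is_derive; auto. intros x Hx. apply FF_deriv; lra.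
- destruct (Req_dec s t) as [->|Hne]; auto.
  symmetry. apply eq_is_derive; [|lra]. intros x Hx. apply FF_deriv; lra.
Qed.

Lemma ln_le_m1 y : 0 < y -> ln y <= y - 1.
Proof. intro Hy. pose proof (exp_ineq1_le (ln y)). rewrite exp_ln in H by lra. lra. Qed.

Lemma zlnz z : 0 < z < 1 -> 0 <= - (z * ln z) <= 2 * sqrt z.
Proof.
intro Hz.
assert (Hl : ln z < 0) by (rewrite <- ln_1; apply ln_increasing; lra).
split. nra.
assert (Hs : 0 < sqrt z) by (apply sqrt_lt_R0; lra).
assert (E : ln z = 2 * ln (sqrt z)).
{ rewrite <- (sqrt_sqrt z) at 1 by lra. rewrite ln_mult by lra. ring. }
assert (H := ln_le_m1 (/ sqrt z) ltac:(apply Rinv_0_lt_compat; lra)).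
rewrite ln_Rinv in H by lra.
assert (-ln z <= 2 / sqrt z) by (unfold Rdiv; lra).
assert (sqrt z * sqrt z = z) by (apply sqrt_sqrt; lra).
assert (- (z * ln z) <= z * (2 / sqrt z)) by nra.
replace (z * (2 / sqrt z)) with (2 * sqrt z) in H2. lra.
rewrite <- H1 at 2. field. lra.
Qed.

Lemma logterm_bound y : 0 < y < 1 -> 0 <= / 2 * ln y * ln (1 - y) <= sqrt (1 - y) / y.
Proof.
intro Hy.
assert (Hl : ln y < 0) by (rewrite <- ln_1; apply ln_increasing; lra).
assert (Hl2 : ln (1 - y) < 0) by (rewrite <- ln_1; apply ln_increasing; lra).
assert (H := ln_le_m1 (/ y) ltac:(apply Rinv_0_lt_compat; lra)).
rewrite ln_Rinv in H by lra.
assert (Z := zlnz (1 - y) ltac:(lra)).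
split. nra.
assert (- ln y <= (1 - y) / y) by (replace ((1-y)/y) with (/y - 1) by (field; lra); lra).
assert ((- ln y) * (- ln (1 - y)) <= (1 - y) / y * (- ln (1 - y))) by (apply Rmult_le_compat_r; lra).
assert ((1 - y) / y * (- ln (1 - y)) = (- ((1 - y) * ln (1 - y))) / y) by (field; lra).
assert ((- ((1 - y) * ln (1 - y))) / y <= 2 * sqrt (1 - y) / y) by (apply Rmult_le_compat_r; [apply Rlt_le, Rinv_0_lt_compat; lra| lra]).
assert (2 * sqrt (1 - y) / y = 2 * (sqrt (1 - y) / y)) by (field; lra).
nra.
Qed.

Lemma seq_at_left (v : nat -> R) : (forall n, v n < 1) -> is_lim_seq v 1 ->
  filterlim v eventually (at_left 1).
Proof.
intros Hv Hl P HP. unfold at_left, within in HP.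
specialize (Hl _ HP). destruct Hl as [N HN]. exists N. intros n Hn. apply HN; auto.
Qed.

Lemma PSa1 : PSeries aB 1 = PI ^ 2 / 6.
Proof.
unfold PSeries. apply is_series_unique. apply is_series_ext with aB.
intro n. rewrite pow1, Rmult_1_r; reflexivity. apply Basel.
Qed.

Lemma Li2_lim (v : nat -> R) : (forall n, 0 < v n < 1) -> is_lim_seq v 1 ->
  is_lim_seq (fun n => Li2 (v n)) (PI ^ 2 / 6).
Proof.
intros Hv Hl.
assert (A := Abel aB). rewrite rad_a in A. simpl in A.
assert (A' : filterlim (PSeries aB) (at_left 1) (locally (PSeries aB 1))).
{ apply A. simpl; lra. simpl; auto. exists (PI^2/6). 
  apply is_series_ext with aB. intro n. rewrite pow_n_pow, pow1. exact (eq_sym (scal_one _)). apply Basel. }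
rewrite PSa1 in A'.
assert (B : is_lim_seq (fun n => PSeries aB (v n)) (PI^2/6)).
{ eapply filterlim_comp. apply seq_at_left. intro n; apply Hv. exact Hl. exact A'. }
apply is_lim_seq_ext with (fun n => v n * PSeries aB (v n)).
intro n. rewrite Li2_PS, PSeries_incr_1. reflexivity.
replace (PI^2/6) with (1 * (PI^2/6)) by ring.
apply is_lim_seq_mult'; auto.
Qed.

Lemma RL_lim (v : nat -> R) : (forall n, 0 < v n < 1) -> is_lim_seq v 1 ->
  is_lim_seq (fun n => RogersL (v n)) (PI ^ 2 / 6).
Proof.
intros Hv Hl. unfold RogersL.
replace (PI^2/6) with (PI^2/6 + 0) by ring.
apply is_lim_seq_plus'. apply Li2_lim; auto.
apply (is_lim_seq_le_le (fun _ => 0) _ (fun n => sqrt (1 - v n) / v n)).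
- intro n. apply logterm_bound; auto.
- apply is_lim_seq_const.
- replace 0 with (sqrt (1 - 1) / 1) by (rewrite Rminus_diag, sqrt_0; field).
  apply is_lim_seq_div'. 2: exact Hl. 2: lra.
  apply (is_lim_seq_continuous sqrt (fun n => 1 - v n)).
  apply continuity_pt_sqrt. lra.
  apply is_lim_seq_minus'. apply is_lim_seq_const. exact Hl.
Qed.

Lemma FF_value t : 0 < t < 1 -> FF t = - (PI ^ 2 / 6).
Proof.
intro Ht.
set (s := fun n : nat => / (INR n + 2)).
assert (Hs : forall n, 0 < s n < 1).
{ intro n. unfold s. pose proof (pos_INR n). split. apply Rinv_0_lt_compat; lra.
  rewrite <- Rinv_1. apply Rinv_lt_contravar; lra. }
assert (Hl : is_lim_seq s 0).
{ unfold s. replace (Finite 0) with (Rbar_inv p_infty) by reflexivity.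
  apply is_lim_seq_inv. 2: discriminate.
  apply is_lim_seq_le_p_loc with INR. 2: apply is_lim_seq_INR.
  exists 0%nat. intros n _. lra. }
assert (L : is_lim_seq (fun n => FF (s n)) (- (PI ^ 2 / 6))).
{ unfold FF.
  replace (- (PI ^ 2 / 6)) with (2 * (PI^2/6) - 2 * (PI^2/6) - (PI^2/6)) by ring.
  apply is_lim_seq_minus'. apply is_lim_seq_minus'.
  - apply (is_lim_seq_mult' (fun _ => 2) (fun n => RogersL (1 - s n))). apply is_lim_seq_const. apply (RL_lim (fun n => 1 - s n)).
    intro n; specialize (Hs n); lra.
    assert (H := is_lim_seq_minus' _ _ _ _ (is_lim_seq_const 1) Hl). rewrite Rminus_0_r in H. exact H.
  - apply (is_lim_seq_mult' (fun _ => 2) (fun n => RogersL (1 / (1 + s n)))). apply is_lim_seq_const. apply (RL_lim (fun n => 1 / (1 + s n))).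
    intro n; specialize (Hs n). split. apply Rdiv_lt_0_compat; lra.
    apply (Rmult_lt_reg_r (1 + s n)). lra. field_simplify; lra.
    assert (H := is_lim_seq_div' _ _ _ _ (is_lim_seq_const 1) (is_lim_seq_plus' _ _ _ _ (is_lim_seq_const 1) Hl) ltac:(lra)).
    replace (1 / (1 + 0)) with 1 in H by field. exact H.
  - apply (RL_lim (fun n => 1 - s n ^ 2)).
    intro n; specialize (Hs n). simpl; split; nra.
    assert (H := is_lim_seq_minus' _ _ _ _ (is_lim_seq_const 1) (is_lim_seq_mult' _ _ _ _ Hl (is_lim_seq_mult' _ _ _ _ Hl (is_lim_seq_const 1)))).
    replace (1 - 0 * (0 * 1)) with 1 in H by ring. exact H. }
apply is_lim_seq_ext with (v := fun _ => FF t) in L.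
2: { intro n. apply FF_const; auto. }
apply is_lim_seq_unique in L. rewrite Lim_seq_const in L. injection L; auto.
Qed.

Lemma sum_shift x n m : sum_f_R0 (fun k => x ^ (n + k)) m = x ^ n * sum_f_R0 (fun k => x ^ k) m.
Proof.
induction m; simpl sum_f_R0.
- rewrite Nat.add_0_r. simpl; ring.
- rewrite IHm, pow_add. rewrite <- (tech_pow_Rmult x m). ring.
Qed.

Lemma sum_ones m : sum_f_R0 (fun k => 1 ^ k) m = INR (S m).
Proof.
induction m; simpl sum_f_R0. simpl; ring. rewrite IHm, pow1. rewrite (S_INR (S m)). ring.
Qed.

Lemma Pn_factor n u : (0 < n)%nat -> (u - 1) * Pn n u = u ^ n * u ^ n * u ^ 2 - 2 * u ^ n + 1.
Proof.
intro Hn. unfold Pn. rewrite sum_shift.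
rewrite Rmult_minus_distr_l.
rewrite (Rmult_comm (u-1) (u ^ n * _)), Rmult_assoc, GP_finite.
rewrite (Rmult_comm (u-1)), GP_finite.
replace (Init.Nat.pred n + 1)%nat with n by lia.
replace (S n + 1)%nat with (n + 2)%nat by lia. rewrite pow_add. ring.
Qed.

Theorem mainTheorem7 (n : nat) (u : R) :
  (0 < n)%nat -> 0 < u -> Pn n u = 0 ->
  2 * RogersL (u ^ (n + 2)) - 2 * RogersL (u ^ n) - RogersL (u ^ 2) = - zeta2.
Proof.
intros Hn Hu HP.
assert (HF := Pn_factor n u Hn). rewrite HP, Rmult_0_r in HF.
assert (X0 : 0 < u ^ n) by (apply pow_lt; lra).
assert (Hne1 : u <> 1).
{ intro E. subst u. unfold Pn in HP. rewrite sum_shift, pow1, Rmult_1_l, !sum_ones in HP.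
  rewrite !S_INR in HP. replace (INR (Init.Nat.pred n)) with (INR n - 1) in HP. lra.
  destruct n. lia. simpl Init.Nat.pred. rewrite S_INR. ring. }
assert (Hlt1 : u < 1).
{ destruct (Rlt_le_dec u 1) as [H|H]; auto. exfalso.
  assert (u > 1) by lra.
  assert (u ^ 2 > 1) by (simpl; nra).
  set (X := u ^ n) in *.
  assert (X * X * u ^ 2 > X * X) by (apply Rmult_gt_compat_l with (r := X * X) in H1; nra).
  clearbody X. pose proof (Rle_0_sqr (X - 1)) as Sq. unfold Rsqr in Sq. nra. }
set (X := u ^ n) in *.
assert (U2 : 0 < u ^ 2 < 1) by (simpl; split; nra).
assert (W : 0 < X * u ^ 2 < 1).
{ split. nra. assert (X < 1). { unfold X. apply pow_lt_1_compat; [lra|lia]. } nra. }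
set (t := 1 - X * u ^ 2).
assert (Ht : 0 < t < 1) by (unfold t; lra).
assert (E1 : u ^ (n + 2) = 1 - t) by (unfold t, X; rewrite pow_add; ring).
assert (E2 : X = 1 / (1 + t)).
{ unfold t. field_simplify_eq. nra. lra. }
assert (E3 : u ^ 2 = 1 - t ^ 2).
{ unfold t. simpl. nra. }
rewrite E1, E2, E3. fold (FF t). rewrite FF_value by auto. unfold zeta2. reflexivity.
Qed.
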